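(* Every DSC semigroup is simple, i.e. has no ideal other than itself.
   Context: For a semigroup $S$, a diagonal subsemigroup of $S\times S$ is a subsemigroup of $S\times S$ containing $\Delta=\{(s,s)\colon s\in S\}$. A congruence on $S$ is a diagonal subsemigroup of $S\times S$ that is symmetric and transitive (as a relation on $S$). A semigroup $S$ is DSC if every diagonal subsemigroup of $S\times S$ is a congruence on $S$. An ideal of $S$ is a nonempty $I\subseteq S$ with $sx,xs\in I$ for all $x\in I$, $s\in S$. *)

(* Defs.v *)
Definition associative_op {S : Type} (op : S -> S -> S) : Prop :=
  forall x y z, op x (op y z) = op (op x y) z.

Definition diagonal_subsemigroup {S : Type} (op : S -> S -> S)
  (D : S -> S -> Prop) : Prop :=
  (forall s, D s s) /\
  (forall a b c d, D a b -> D c d -> D (op a c) (op b d)).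

Definition congruence {S : Type} (op : S -> S -> S) (D : S -> S -> Prop) : Prop :=
  diagonal_subsemigroup op D /\
  (forall a b, D a b -> D b a) /\
  (forall a b c, D a b -> D b c -> D a c).

Definition DSC {S : Type} (op : S -> S -> S) : Prop :=
  forall D : S -> S -> Prop, diagonal_subsemigroup op D -> congruence op D.

Definition is_ideal {S : Type} (op : S -> S -> S) (I : S -> Prop) : Prop :=
  (exists x, I x) /\
  (forall s x, I x -> I (op s x) /\ I (op x s)).

Definition simple_semigroup {S : Type} (op : S -> S -> S) : Prop :=
  forall I : S -> Prop, is_ideal op I -> forall x, I x.

(* Main.v *)
Require Import Defs.

Theorem mainTheorem2 (S : Type) (op : S -> S -> S) (Hassoc : associative_op op) :
  DSC op -> simple_semigroup op.
Proof.
  intros HD I [[i Hi] HI] x.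
  set (D := fun a b : S => a = b \/ I a).
  assert (Hd : diagonal_subsemigroup op D).
  { split.
    - intros s; left; reflexivity.
    - intros a b c d [H1|H1] [H2|H2].
      + left; subst; reflexivity.
      + right; apply (HI a c H2).
      + right; apply (HI c a H1).
      + right; apply (HI c a H1). }
  destruct (HD D Hd) as [_ [Hsym _]].
  assert (Hix : D i x) by (right; exact Hi).
  destruct (Hsym _ _ Hix) as [E|E]; [subst; exact Hi | exact E].
Qed.
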